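(* Let $k,l\geq0$ be integers and $X,Y,Z,V$ be $N\times N$ real symmetric positive semidefinite matrices. Then, in the Löwner order, \[ X^{k}\otimes V\otimes X^{l}+(X+Y+Z)^{k}\otimes V\otimes(X+Y+Z)^{l}\geq(X+Y)^{k}\otimes V\otimes(X+Y)^{l}+(X+Z)^{k}\otimes V\otimes(X+Z)^{l}. \]
   Context: Notation: for a matrix $W$ and $j\geq1$, $W^{j}$ denotes the $j$-fold tensor (Kronecker) power $W\otimes\cdots\otimes W$, and $W^{0}=1$ (the scalar one, so that tensoring with $W^{0}$ leaves a factor unchanged). The Löwner order: $S\leq T$ iff $T-S$ is positive semidefinite. *)

(* Defs.v *)
(* Kronecker products/powers from mathcomp real_closed mxtens:
   A *t B (tensmx) and A ^t k (ntensmx, with A ^t 0 = 1 : 'M_1). *)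
From mathcomp Require Import all_boot all_order all_algebra.
From mathcomp Require Export mxtens.
From mathcomp Require Export reals.
Set Implicit Arguments. Unset Strict Implicit. Unset Printing Implicit Defensive.
Import Order.TTheory GRing.Theory Num.Theory.
Local Open Scope ring_scope.

Definition psdmx {R : realType} {n : nat} (A : 'M[R]_n) : Prop :=
  A^T = A /\ forall v : 'cV[R]_n, 0 <= (v^T *m A *m v) 0 0.

Definition loewner_le {R : realType} {n : nat} (S T : 'M[R]_n) : Prop :=
  psdmx (T - S).

(* Main.v *)
Require Import Defs.
From mathcomp Require Import all_boot all_order all_algebra.
From mathcomp Require Import mxtens reals ring lra.
Set Implicit Arguments. Unset Strict Implicit. Unset Printing Implicit Defensive.
Import Order.TTheory GRing.Theory Num.Theory.
Local Open Scope ring_scope.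

Section S.
Variable R : realType.

Lemma quadD n (A : 'M[R]_n) (v x : 'cV[R]_n) (t : R) : A^T = A ->
  ((v + t *: x)^T *m A *m (v + t *: x)) 0 0 =
  (v^T *m A *m v) 0 0 + 2 * t * (x^T *m A *m v) 0 0 + t ^+ 2 * (x^T *m A *m x) 0 0.
Proof.
move=> sA.
have sym : (v^T *m A *m x) 0 0 = (x^T *m A *m v) 0 0.
  have -> : (v^T *m A *m x) = (x^T *m A *m v)^T by rewrite !trmx_mul trmxK sA mulmxA.
  by rewrite mxE.
rewrite [(v + _)^T]linearD /= [(t *: x)^T]linearZ /= !mulmxDl !mulmxDr -!scalemxAl -!scalemxAr.
move: sym; set a := v^T *m A *m v; set b := v^T *m A *m x; set c := x^T *m A *m v; set d := x^T *m A *m x.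
rewrite !mxE => ->.
ring.
Qed.

Definition gram {n} (A : 'M[R]_n) := exists p (M : 'M[R]_(p,n)), A = M^T *m M.
Lemma gram0 n : gram (0 : 'M[R]_n).
Proof. by exists 1%N, 0; rewrite mulmx0. Qed.
Lemma gramD n (A B : 'M[R]_n) : gram A -> gram B -> gram (A + B).
Proof.
move=> [p [M ->]] [q [P ->]]; exists (p + q)%N, (col_mx M P).
by rewrite tr_col_mx mul_row_col.
Qed.

Definition ev n (i : 'I_n) : 'cV[R]_n := delta_mx i 0.

Lemma evAv n (A : 'M[R]_n) i (v : 'cV[R]_n) :
  ((ev i)^T *m A *m v) 0 0 = (row i A *m v) 0 0.
Proof. by rewrite /ev trmx_delta -rowE. Qed.

Lemma evAev n (A : 'M[R]_n) i j : ((ev i)^T *m A *m ev j) 0 0 = A i j.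
Proof. by rewrite evAv /ev -colE !mxE. Qed.

Lemma psd_diag n (A : 'M[R]_n) i : psdmx A -> 0 <= A i i.
Proof. by move=> [_ /(_ (ev i))]; rewrite evAev. Qed.

Lemma psd_diag0 n (A : 'M[R]_n) i (v : 'cV[R]_n) : psdmx A -> A i i = 0 ->
  ((ev i)^T *m A *m v) 0 0 = 0.
Proof.
move=> [sA pA] A0; set b := (_ 0 0).
have H t : 0 <= (v^T *m A *m v) 0 0 + 2 * t * b.
  by have := pA (v + t *: ev i); rewrite quadD // evAev A0 mulr0 addr0.
apply/eqP; apply/negPn/negP => bn0.
have := H (- ((v^T *m A *m v) 0 0 + 1) / (2 * b)).
set q := (v^T *m A *m v) 0 0.
have -> : 2 * (- (q + 1) / (2 * b)) * b = - (q + 1) by field; rewrite bn0.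
lra.
Qed.

Lemma psd_schur n (A : 'M[R]_n) i (v : 'cV[R]_n) : psdmx A -> 0 < A i i ->
  ((ev i)^T *m A *m v) 0 0 ^+ 2 / A i i <= (v^T *m A *m v) 0 0.
Proof.
move=> [sA pA] apos; set b := (_ 0 0); set q := (_ 0 0).
have := pA (v + (- b / A i i) *: ev i); rewrite quadD // evAev -/q -/b.
rewrite -addrA.
have -> : 2 * (- b / A i i) * b + (- b / A i i) ^+ 2 * A i i = - (b ^+ 2 / A i i).
  by field; rewrite gt_eqF.
lra.
Qed.

Lemma psd_zero n (A : 'M[R]_n) : psdmx A -> (forall i, A i i = 0) -> A = 0.
Proof.
move=> pA d0; apply/matrixP => i j; rewrite mxE -evAev.
exact: psd_diag0.
Qed.

Lemma psd_gram_aux n m (A : 'M[R]_n) : psdmx A ->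
  (#|[pred i | A i i != 0%R]| <= m)%N -> gram A.
Proof.
elim: m A => [|m IH] A pA.
  move=> c0; rewrite (psd_zero pA); first exact: gram0.
  move=> i; apply/eqP; apply/negPn/negP => Hi.
  suff : (0 < #|[pred i | A i i != 0%R]|)%N by rewrite leqn0 in c0; rewrite (eqP c0).
  by apply/card_gt0P; exists i.
move=> cA.
case: (pickP [pred i | A i i != 0]) => [i /= Hi | none]; last first.
  rewrite (psd_zero pA); first by exists 1%N, 0; rewrite mulmx0.
  by move=> j; apply/eqP; move: (none j) => /= /negbT /negPn.
have apos : 0 < A i i by rewrite lt_def Hi psd_diag.
set a := A i i in apos Hi.
set u : 'rV[R]_n := (Num.sqrt a)^-1 *: row i A.
have uE j : u 0 j = (Num.sqrt a)^-1 * A i j by rewrite !mxE.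
have sqa : (Num.sqrt a)^-1 ^+ 2 = a^-1 by rewrite exprVn sqr_sqrtr // ltW.
have sA : A^T = A by case: pA.
have Asym j k : A j k = A k j by rewrite -[in LHS]sA mxE.
set B := A - u^T *m u.
have BE j k : B j k = A j k - A i j * A i k / a.
  rewrite !mxE big_ord1 !mxE; rewrite -sqa; ring.
have pB : psdmx B.
  split; first by rewrite /B linearB /= trmx_mul trmxK sA.
  move=> v; rewrite /B mulmxBr mulmxBl.
  have -> : (v^T *m A *m v - v^T *m (u^T *m u) *m v) 0 0 = (v^T *m A *m v) 0 0 - (v^T *m (u^T *m u) *m v) 0 0 by rewrite !mxE.
  have -> : (v^T *m (u^T *m u) *m v) 0 0 = ((ev i)^T *m A *m v) 0 0 ^+ 2 / a.
    rewrite mulmxA -trmx_mul -mulmxA mxE big_ord1 mxE evAv /u -scalemxAl mxE.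
    by rewrite mulrC -expr2 exprMn sqa mulrC.
  by rewrite subr_ge0; apply: psd_schur.
have -> : A = B + u^T *m u by rewrite /B subrK.
apply: gramD; last by exists 1%N, u.
apply: IH => //.
have sub : [pred j | B j j != 0%R] \subset [predD1 [pred j | A j j != 0%R] & i].
  apply/subsetP => j; rewrite !inE BE.
  have [->|ji] := eqVneq j i.
    rewrite /= -/a; apply/implyP; rewrite implybF negbK; apply/eqP; field; by rewrite gt_eqF.
  case: (eqVneq (A j j) 0) => // Ajj.
  have : A j i = 0 by rewrite -evAev; apply: psd_diag0.
  by rewrite Asym Ajj => ->; rewrite !mul0r subr0 eqxx.
apply: leq_trans (subset_leq_card sub) _.
by rewrite (cardD1 i) inE /= Hi in cA.
Qed.

Lemma psd_gram n (A : 'M[R]_n) : psdmx A -> gram A.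
Proof. by move=> pA; apply: (psd_gram_aux (m := n)) => //; apply: leq_trans (max_card _) _; rewrite card_ord. Qed.

Lemma gramT m n (A : 'M[R]_m) (B : 'M[R]_n) : gram A -> gram B -> gram (A *t B).
Proof.
move=> [p [M ->]] [q [P ->]]; exists (p * q)%N, (M *t P).
by rewrite trmx_tens tensmx_mul.
Qed.

Lemma gram1 : gram (1 : 'M[R]_1).
Proof. by exists 1%N, 1; rewrite trmx1 mulmx1. Qed.

Lemma gram_psd n (A : 'M[R]_n) : gram A -> psdmx A.
Proof.
move=> [p [M ->]]; split; first by rewrite trmx_mul trmxK.
move=> v; rewrite !mulmxA -trmx_mul -mulmxA mxE.
by apply: sumr_ge0 => i _; rewrite !mxE -expr2 sqr_ge0.
Qed.

Definition good {n} (a0 aY aZ aYZ : 'M[R]_n) :=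
  exists g0 gY gZ gYZ, [/\ gram g0, gram gY, gram gZ & gram gYZ] /\
    [/\ a0 = g0, aY = g0 + gY, aZ = g0 + gZ & aYZ = g0 + gY + gZ + gYZ].

Lemma goodT m n (a0 aY aZ aYZ : 'M[R]_m) (b0 bY bZ bYZ : 'M[R]_n) :
  good a0 aY aZ aYZ -> good b0 bY bZ bYZ ->
  good (a0 *t b0) (aY *t bY) (aZ *t bZ) (aYZ *t bYZ).
Proof.
move=> [g0 [gY [gZ [gYZ [[G0 GY GZ GYZ] [-> -> -> ->]]]]]].
move=> [k0 [kY [kZ [kYZ [[K0 KY KZ KYZ] [-> -> -> ->]]]]]].
exists (g0 *t k0), (g0 *t kY + gY *t k0 + gY *t kY),
  (g0 *t kZ + gZ *t k0 + gZ *t kZ),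
  (g0 *t kYZ + gY *t kZ + gY *t kYZ + gZ *t kY + gZ *t kYZ + gYZ *t k0
   + gYZ *t kY + gYZ *t kZ + gYZ *t kYZ).
split; first by split; repeat first [assumption | apply: gramD | apply: gramT].
by split; apply/matrixP => i j; rewrite !mxE; ring.
Qed.

Lemma good_const n (V : 'M[R]_n) : gram V -> good V V V V.
Proof.
move=> GV; exists V, 0, 0, 0; split; first by split => //; apply: gram0.
by split; rewrite ?addr0.
Qed.

Lemma good_base n (X Y Z : 'M[R]_n) : gram X -> gram Y -> gram Z ->
  good X (X + Y) (X + Z) (X + Y + Z).
Proof.
move=> GX GY GZ; exists X, Y, Z, 0; split; first by split => //; apply: gram0.
by split; rewrite ?addr0.
Qed.

Lemma good_ntens n (X Y Z : 'M[R]_n) k : gram X -> gram Y -> gram Z ->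
  good (X ^t k) ((X + Y) ^t k) ((X + Z) ^t k) ((X + Y + Z) ^t k).
Proof.
move=> GX GY GZ; elim: k => [|[|k] IH].
- by rewrite !ntensmx0; apply: good_const; apply: gram1.
- by rewrite !ntensmx1; apply: good_base.
- by rewrite !ntensmxSS; apply: goodT => //; apply: good_base.
Qed.

End S.

Theorem lemma5p9 (R : realType) (N k l : nat) (X Y Z V : 'M[R]_N) :
  psdmx X -> psdmx Y -> psdmx Z -> psdmx V ->
  loewner_le
    ((X + Y) ^t k *t V *t (X + Y) ^t l + (X + Z) ^t k *t V *t (X + Z) ^t l)
    (X ^t k *t V *t X ^t l + (X + Y + Z) ^t k *t V *t (X + Y + Z) ^t l).
Proof.
move=> /psd_gram GX /psd_gram GY /psd_gram GZ /psd_gram GV.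
have := goodT (goodT (good_ntens k GX GY GZ) (good_const GV)) (good_ntens l GX GY GZ).
move=> [g0 [gY [gZ [gYZ [[G0 _ _ GYZ] [-> -> -> ->]]]]]].
rewrite /loewner_le; apply: gram_psd.
suff -> : g0 + (g0 + gY + gZ + gYZ) - (g0 + gY + (g0 + gZ)) = gYZ by [].
by apply/matrixP => i j; rewrite !mxE; ring.
Qed.
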